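(* Let $(x_1,y_1),\dots,(x_n,y_n)$ be points in $\mathbb{R}^2$, let $z_i=x_i^2+y_i^2$, and for any expressions $u,v$ write $M_u=\sum_{i=1}^n u_i$ and $M_{uv}=\sum_{i=1}^n u_iv_i$ (e.g. $M_{xz}=\sum_i x_iz_i$, $M_{zz}=\sum_i z_i^2$, $M_x=\sum_i x_i$). Define the symmetric $4\times 4$ matrices $$ \mathbf{M}=\begin{pmatrix} M_{zz} & M_{xz} & M_{yz} & M_z\\ M_{xz} & M_{xx} & M_{xy} & M_x\\ M_{yz} & M_{xy} & M_{yy} & M_y\\ M_z & M_x & M_y & n \end{pmatrix},\qquad \mathbf{B}=\begin{pmatrix} 0&0&0&-2\\ 0&1&0&0\\ 0&0&1&0\\ -2&0&0&0 \end{pmatrix}, $$ and the quartic polynomial $Q_4(\eta)=\det(\mathbf{M}-\eta\mathbf{B})$. Let $\eta_\ast=\min\{\eta\ge 0:\ Q_4(\eta)=0\}$ be the first nonnegative root of $Q_4$. Then $Q_4$ is decreasing and concave up on the interval between $\eta=0$ and $\eta_\ast$. Consequently, Newton's method applied to the equation $Q_4(\eta)=0$ with starting point $\eta=0$ always converges to $\eta_\ast$.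
   Context: This arises in Pratt's algebraic circle fit: one minimizes $\sum_{i=1}^n (Az_i+Bx_i+Cy_i+D)^2=\mathbf{A}^T\mathbf{M}\mathbf{A}$ over $\mathbf{A}=(A,B,C,D)^T$ subject to $B^2+C^2-4AD=\mathbf{A}^T\mathbf{B}\mathbf{A}=1$, and the minimum value equals the smallest nonnegative generalized eigenvalue $\eta_\ast$ of the pair $(\mathbf{M},\mathbf{B})$. *)

(* Defs.v *)
From HB Require Import structures.
From mathcomp Require Import all_boot all_order all_algebra.
From mathcomp Require Import all_classical all_reals all_analysis.
Set Implicit Arguments. Unset Strict Implicit. Unset Printing Implicit Defensive.
Import Order.TTheory GRing.Theory Num.Theory.
Local Open Scope ring_scope.

Section Pratt.
Variables (R : realType) (n : nat) (x y : 'I_n -> R).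

Definition zc (i : 'I_n) : R := x i ^+ 2 + y i ^+ 2.

Definition feat (k : 'I_4) (i : 'I_n) : R :=
  match val k with 0 => zc i | 1 => x i | 2 => y i | _ => 1 end.

(* M_{uv} = \sum_i u_i v_i; entries of M (note M_{11 11} = \sum_i 1 = n) *)
Definition prattM : 'M[R]_4 :=
  \matrix_(k, l) \sum_(i < n) feat k i * feat l i.

Definition prattB : 'M[R]_4 :=
  \matrix_(k, l)
    match val k, val l with
    | 0, 3 => -2 | 3, 0 => -2
    | 1, 1 => 1 | 2, 2 => 1
    | _, _ => 0 end.

Definition Q4 : {poly R} :=
  \det (map_mx polyC prattM - 'X *: map_mx polyC prattB).

Fixpoint newton (k : nat) : R :=
  match k with
  | 0 => 0
  | k'.+1 => newton k' - Q4.[newton k'] / (Q4^`()).[newton k']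
  end.

End Pratt.

(* Main.v *)
Require Import Defs.
From HB Require Import structures.
From mathcomp Require Import all_boot all_order all_algebra.
From mathcomp Require Import all_classical all_reals all_analysis.
From mathcomp Require Import ring lra.
Import Order.TTheory GRing.Theory Num.Theory.
Import numFieldNormedType.Exports.
Local Open Scope classical_set_scope.
Local Open Scope ring_scope.

Definition det4f {R : comPzRingType} (a : nat -> nat -> R) : R :=
  a 0%N 0%N * (a 1%N 1%N * (a 2%N 2%N * a 3%N 3%N - a 2%N 3%N * a 3%N 2%N)
           - a 1%N 2%N * (a 2%N 1%N * a 3%N 3%N - a 2%N 3%N * a 3%N 1%N)
           + a 1%N 3%N * (a 2%N 1%N * a 3%N 2%N - a 2%N 2%N * a 3%N 1%N))
- a 0%N 1%N * (a 1%N 0%N * (a 2%N 2%N * a 3%N 3%N - a 2%N 3%N * a 3%N 2%N)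
           - a 1%N 2%N * (a 2%N 0%N * a 3%N 3%N - a 2%N 3%N * a 3%N 0%N)
           + a 1%N 3%N * (a 2%N 0%N * a 3%N 2%N - a 2%N 2%N * a 3%N 0%N))
+ a 0%N 2%N * (a 1%N 0%N * (a 2%N 1%N * a 3%N 3%N - a 2%N 3%N * a 3%N 1%N)
           - a 1%N 1%N * (a 2%N 0%N * a 3%N 3%N - a 2%N 3%N * a 3%N 0%N)
           + a 1%N 3%N * (a 2%N 0%N * a 3%N 1%N - a 2%N 1%N * a 3%N 0%N))
- a 0%N 3%N * (a 1%N 0%N * (a 2%N 1%N * a 3%N 2%N - a 2%N 2%N * a 3%N 1%N)
           - a 1%N 1%N * (a 2%N 0%N * a 3%N 2%N - a 2%N 2%N * a 3%N 0%N)
           + a 1%N 2%N * (a 2%N 0%N * a 3%N 1%N - a 2%N 1%N * a 3%N 0%N)).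
Lemma det4 (R : comPzRingType) (A : 'M[R]_4) :
  \det A = det4f (fun k l => A (inord k) (inord l)).
Proof.
pose f (k l : nat) := A (inord k) (inord l).
have E : forall i j : 'I_4, A i j = f i j by move=> i j; rewrite /f !inord_val.
set rhs := det4f _.
rewrite (expand_det_row _ ord0) /cofactor.
have h3 (B : 'M[R]_(4.-1)) : \det B = \sum_j B ord0 j * cofactor B ord0 j := expand_det_row B ord0.
have h2 (B : 'M[R]_(4.-1.-1)) : \det B = \sum_j B ord0 j * cofactor B ord0 j := expand_det_row B ord0.
have h1 (B : 'M[R]_(4.-1.-1.-1)) : \det B = B ord0 ord0 := det_mx11 B.
rewrite !big_ord_recr big_ord0.


rewrite !h3 !big_ord_recr !big_ord0 /cofactor !h2 !big_ord_recr !big_ord0 /cofactor !h1.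
idtac.
rewrite ?mxE !E /bump /=.
rewrite /f /bump /=.
rewrite ?(addSn, add0n, addn0).
rewrite /rhs /det4f /f.
ring.
Qed.

Definition c0f {R : realType} (m00 m01 m02 m11 m12 m13 m22 m23 m33 : R) : R := m00 * m11 * m22 * m33 - m00 * m11 * m23 ^+ 2 + 2%:R * m00 * m12 * m13 * m23 - m00 * m12 ^+ 2 * m33 - m00 * m13 ^+ 2 * m22 + 2%:R * m01 * m02 * m12 * m33 - 2%:R * m01 * m02 * m13 * m23 - 2%:R * m01 * m11 * m12 * m23 + 2%:R * m01 * m11 * m13 * m22 - 2%:R * m01 * m12 * m22 * m23 + 2%:R * m01 * m13 * m22 ^+ 2 - m01 ^+ 2 * m22 * m33 + m01 ^+ 2 * m23 ^+ 2 - 2%:R * m02 * m11 * m12 * m13 + 2%:R * m02 * m11 * m22 * m23 + 2%:R * m02 * m11 ^+ 2 * m23 - 2%:R * m02 * m12 * m13 * m22 - m02 ^+ 2 * m11 * m33 + m02 ^+ 2 * m13 ^+ 2 + 2%:R * m11 * m12 ^+ 2 * m22 - m11 * m22 ^+ 3 + m11 ^+ 2 * m12 ^+ 2 - 2%:R * m11 ^+ 2 * m22 ^+ 2 - m11 ^+ 3 * m22 + m12 ^+ 2 * m22 ^+ 2.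
Definition c1f {R : realType} (m00 m01 m02 m11 m12 m13 m22 m23 m33 : R) : R := - m00 * m11 * m33 + m00 * m13 ^+ 2 - m00 * m22 * m33 + m00 * m23 ^+ 2 - 2%:R * m01 * m11 * m13 - 4%:R * m01 * m12 * m23 + 2%:R * m01 * m13 * m22 + m01 ^+ 2 * m33 + 2%:R * m02 * m11 * m23 - 4%:R * m02 * m12 * m13 - 2%:R * m02 * m22 * m23 + m02 ^+ 2 * m33 + 4%:R * m11 * m12 ^+ 2 - m11 * m22 ^+ 2 - m11 ^+ 2 * m22 + m11 ^+ 3 + 4%:R * m12 ^+ 2 * m22 + m22 ^+ 3.
Definition c2f {R : realType} (m00 m01 m02 m11 m12 m13 m22 m23 m33 : R) : R := m00 * m33 - 4%:R * m01 * m13 - 4%:R * m02 * m23 + 2%:R * m11 * m22 + 3%:R * m11 ^+ 2 + 4%:R * m12 ^+ 2 + 3%:R * m22 ^+ 2.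

Section L0.
Variables (R : realType) (n : nat) (x y : 'I_n -> R).
Definition mm (k l : nat) : R := prattM x y (inord k) (inord l).
Definition c0r := c0f (mm 0 0) (mm 0 1) (mm 0 2) (mm 1 1) (mm 1 2) (mm 1 3) (mm 2 2) (mm 2 3) (mm 3 3).
Definition c1r := c1f (mm 0 0) (mm 0 1) (mm 0 2) (mm 1 1) (mm 1 2) (mm 1 3) (mm 2 2) (mm 2 3) (mm 3 3).
Definition c2r := c2f (mm 0 0) (mm 0 1) (mm 0 2) (mm 1 1) (mm 1 2) (mm 1 3) (mm 2 2) (mm 2 3) (mm 3 3).

Lemma mm_sym k l : mm k l = mm l k.
Proof. rewrite /mm !mxE; apply: eq_bigr => i _; exact: mulrC. Qed.

Lemma mmE k l : (k < 4)%N -> (l < 4)%N -> mm k l =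
   \sum_(i < n) feat x y (inord k) i * feat x y (inord l) i.
Proof. by move=> hk hl; rewrite /mm mxE. Qed.

Lemma mm03 : mm 0 3 = mm 1 1 + mm 2 2.
Proof.
rewrite !mmE // /feat /= !inordK //= -big_split /=.
by apply: eq_bigr => i _; rewrite /zc mulr1.
Qed.

Lemma Q4E : Q4 x y = - (4%:R *: 'X^4) + c2r%:P * 'X^2 + c1r%:P * 'X + c0r%:P.
Proof.
rewrite /Q4 det4 /det4f.
have AE k l : (map_mx polyC (prattM x y) - 'X *: map_mx polyC (prattB R)) k l
   = (prattM x y k l)%:P - 'X * (prattB R k l)%:P by rewrite !mxE.
rewrite !AE -!/(mm _ _).
rewrite /prattB !mxE /= !inordK //=.

rewrite (mm_sym 1 0) (mm_sym 2 0) (mm_sym 3 0) (mm_sym 2 1) (mm_sym 3 1) (mm_sym 3 2) mm03.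
rewrite /c0r /c1r /c2r /c0f /c1f /c2f.
rewrite -mul_polyC.
ring.
Qed.
End L0.

Section L2.
Variables (R : realType) (P : {poly R}) (c2 c1 c0 es : R) (xs : nat -> R).
Hypothesis PE : forall e, P.[e] = - (4%:R * e ^+ 4) + c2 * e ^+ 2 + c1 * e + c0.
Hypothesis dPE : forall e, (deriv P).[e] = - (16%:R * e ^+ 3) + 2%:R * c2 * e + c1.
Hypothesis es0 : 0 <= es.
Hypothesis Pes : P.[es] = 0.
Hypothesis Ppos : forall a, 0 <= a -> a < es -> 0 < P.[a].
Hypothesis c2b : 24%:R * es ^+ 2 <= c2.
Hypothesis xs0 : xs 0%N = 0.
Hypothesis xsS : forall k, xs k.+1 = xs k - P.[xs k] / (deriv P).[xs k].

Lemma pr_tangent {a b : R} : 0 <= a -> a <= es -> 0 <= b -> b <= es ->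
  P.[a] + (deriv P).[a] * (b - a) <= P.[b].
Proof.
move=> a0 ae b0 be; rewrite PE dPE PE -subr_ge0.
have -> : - (4%:R * b ^+ 4) + c2 * b ^+ 2 + c1 * b + c0 -
   (- (4%:R * a ^+ 4) + c2 * a ^+ 2 + c1 * a + c0 +
    (- (16%:R * a ^+ 3) + 2%:R * c2 * a + c1) * (b - a)) =
   (b - a) ^+ 2 * (c2 - 4%:R * (b ^+ 2 + 2%:R * a * b + 3%:R * a ^+ 2)) by ring.
apply: mulr_ge0; first exact: sqr_ge0.
have h1 : a * a <= es * es by apply: ler_pM.
have h2 : a * b <= es * es by apply: ler_pM.
have h3 : b * b <= es * es by apply: ler_pM.
rewrite subr_ge0; move: h1 h2 h3 c2b; rewrite !expr2; lra.
Qed.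

Lemma pr_dmono {a b : R} : 0 <= a -> a <= b -> b <= es -> (deriv P).[a] <= (deriv P).[b].
Proof.
move=> a0 ab be; rewrite !dPE -subr_ge0.
have -> : - (16%:R * b ^+ 3) + 2%:R * c2 * b + c1 - (- (16%:R * a ^+ 3) + 2%:R * c2 * a + c1)
   = (b - a) * (2%:R * c2 - 16%:R * (a ^+ 2 + a * b + b ^+ 2)) by ring.
apply: mulr_ge0; first by rewrite subr_ge0.
have ae : a <= es by apply: le_trans be.
have b0 : 0 <= b by apply: le_trans ab.
have h1 : a * a <= es * es by apply: ler_pM.
have h2 : a * b <= es * es by apply: ler_pM.
have h3 : b * b <= es * es by apply: ler_pM.
rewrite subr_ge0; move: h1 h2 h3 c2b; rewrite !expr2; lra.
Qed.

Lemma pr_dneg {a : R} : 0 <= a -> a < es -> (deriv P).[a] < 0.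
Proof.
move=> a0 ae; have := pr_tangent a0 (ltW ae) es0 (lexx es); rewrite Pes.
have := Ppos a a0 ae; nra.
Qed.

Lemma pr_decr {a b : R} : 0 <= a -> a < b -> b <= es -> P.[b] < P.[a].
Proof.
move=> a0 ab be; have ae : a < es by apply: lt_le_trans be.
have Pa := Ppos a a0 ae.
case: (ltP b es) => [bl|bg].
  have b0 : 0 <= b by apply: le_trans (ltW ab).
  have := pr_tangent b0 be a0 (ltW ae); have := pr_dneg b0 bl; nra.
have -> : b = es by apply/eqP; rewrite eq_le be bg.
by rewrite Pes.
Qed.

Lemma pr_convex a b t : 0 <= a -> a <= es -> 0 <= b -> b <= es -> 0 <= t -> t <= 1 ->
  P.[t * a + (1 - t) * b] <= t * P.[a] + (1 - t) * P.[b].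
Proof.
move=> a0 ae b0 be t0 t1; set m := t * a + (1 - t) * b.
have m0 : 0 <= m by rewrite /m; nra.
have me : m <= es by rewrite /m; nra.
have h1 := pr_tangent m0 me a0 ae; have h2 := pr_tangent m0 me b0 be.
have e1 : t * (a - m) + (1 - t) * (b - m) = 0 by rewrite /m; ring.
have t1' : 0 <= 1 - t by lra.
have := ler_wpM2l t0 h1; have := ler_wpM2l t1' h2.
move: e1; set d := (deriv P).[m]; set q := P.[m]; nra.
Qed.

Lemma pr_step_ok {u : R} : 0 <= u -> u <= es ->
  u <= u - P.[u] / (deriv P).[u] /\ u - P.[u] / (deriv P).[u] <= es.
Proof.
move=> u0 ue; case: (ltP u es) => [ul|ug]; last first.
  have -> : u = es by apply/eqP; rewrite eq_le ue ug.
  by rewrite Pes mul0r subr0.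
have q0 := Ppos u u0 ul; have d0 := pr_dneg u0 ul.
have t := pr_tangent u0 ue es0 (lexx es); rewrite Pes in t.
have -> : u - P.[u] / (deriv P).[u] = u + P.[u] / (- (deriv P).[u])
  by rewrite invrN mulrN.
move: q0 d0 t; set q := P.[u]; set d := (deriv P).[u] => q0 d0 t.
have nd : 0 < - d by rewrite oppr_gt0.
split; first by rewrite lerDl divr_ge0 // ltW.
rewrite -lerBrDl ler_pdivrMr //; nra.
Qed.

Lemma pr_xs_inv k : 0 <= xs k <= es /\ xs k <= xs k.+1.
Proof.
have B : forall k, 0 <= xs k <= es.
  elim=> [|j /andP [j0 je]]; first by rewrite xs0 lexx es0.
  have [h1 h2] := pr_step_ok j0 je; rewrite xsS; apply/andP; split => //.
  exact: le_trans h1.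
split; first exact: B.
have /andP [k0 ke] := B k; rewrite xsS; exact: (pr_step_ok k0 ke).1.
Qed.

Lemma pr_xs_mono K j : xs K <= xs (K + j).
Proof.
elim: j => [|j IH]; first by rewrite addn0.
by rewrite addnS; apply: le_trans IH (pr_xs_inv _).2.
Qed.

Lemma pr_xs_close {eps : R} : 0 < eps -> exists K, es - eps < xs K.
Proof.
move=> eps0; case: (ltP (es - eps) 0) => [yn|yp].
  by exists 0%N; rewrite xs0.
set yv := es - eps.
have yes : yv < es by rewrite /yv; lra.
have esp : 0 < es by apply: le_lt_trans yes.
have d0 := pr_dneg (lexx 0) esp.
have Py := Ppos yv yp yes.
set kap := P.[yv] / (- (deriv P).[0]).
have nd0 : 0 < - (deriv P).[0] by rewrite oppr_gt0.
have kap0 : 0 < kap by rewrite /kap divr_gt0.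
have claim : forall k, yv < xs k \/ k%:R * kap <= xs k.
  elim=> [|k IH]; first by right; rewrite mul0r xs0.
  have /andP [k0 ke] := (pr_xs_inv k).1.
  case: (ltP yv (xs k)) => [l|g].
    by left; apply: lt_le_trans l (pr_xs_inv k).2.
  case: IH => [IH|IH]; first by move: IH g; rewrite ltNge => /negP.
  right.
  have xl : xs k < es by apply: le_lt_trans g yes.
  have dk := pr_dneg k0 xl.
  have ndk : 0 < - (deriv P).[xs k] by rewrite oppr_gt0.
  have dm : (deriv P).[0] <= (deriv P).[xs k] := pr_dmono (lexx 0) k0 (ltW xl).
  have Pk : P.[yv] <= P.[xs k].
    case: (ltP (xs k) yv) => [l2|g2]; first exact: ltW (pr_decr k0 l2 (ltW yes) : P.[yv] < P.[xs k]).
    by have -> : xs k = yv by apply/eqP; rewrite eq_le g g2.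
  have st : kap <= P.[xs k] / (- (deriv P).[xs k]).
    rewrite /kap; apply: le_trans (_ : P.[yv] / (- (deriv P).[xs k]) <= _).
      rewrite ler_pM2l // lef_pV2 ?posrE //; lra.
    by rewrite ler_pM2r // invr_gt0.
  rewrite xsS -addn1 natrD mulrDl mul1r.
  have -> : xs k - P.[xs k] / (deriv P).[xs k] = xs k + P.[xs k] / (- (deriv P).[xs k])
    by rewrite invrN mulrN.
  exact: lerD.
pose N := (Num.truncn (es / kap)).+1.
exists N; case: (claim N) => // h.
have := truncnS_gt (es / kap); rewrite -/N ltr_pdivrMr // => h2.
have /andP [_ h3] := (pr_xs_inv N).1.
lra.
Qed.

Lemma pr_newton_cvg : xs @ \oo --> es.
Proof.
apply/cvgrPdist_lt => eps eps0.
have [K hK] := pr_xs_close eps0.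
exists K => // k /= hk.
have -> : k = (K + (k - K))%N by rewrite subnKC.
have := pr_xs_mono K (k - K); have /andP [_ h] := (pr_xs_inv (K + (k - K))).1.
move=> h2; rewrite ger0_norm; lra.
Qed.

End L2.

Lemma lin_zero (R : realFieldType) (g c : R) : (forall t, 0 <= g + c * t) -> c = 0.
Proof.
move=> h; apply/eqP/negPn/negP => c0.
have := h (- (g + 1) / c).
rewrite mulrA (mulrC c) -mulrA divff // mulr1; lra.
Qed.

Lemma two_eq0 (R : realFieldType) (z : R) : 2%:R * z = 0 -> z = 0.
Proof. by move/eqP; rewrite mulf_eq0 pnatr_eq0 /= => /eqP. Qed.

Lemma adj_psd (R : realFieldType) (al ga b w1 w2 : R) : 0 <= al -> 0 <= ga ->
  b ^+ 2 <= al * ga -> 0 <= ga * w1 ^+ 2 - 2%:R * b * w1 * w2 + al * w2 ^+ 2.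
Proof.
move=> a0 g0 h; case: (ltP 0 ga) => [gp|gn].
  rewrite -(pmulr_rge0 _ gp).
  have -> : ga * (ga * w1 ^+ 2 - 2%:R * b * w1 * w2 + al * w2 ^+ 2) =
    (ga * w1 - b * w2) ^+ 2 + (al * ga - b ^+ 2) * w2 ^+ 2 by ring.
  apply: addr_ge0; first exact: sqr_ge0.
  by apply: mulr_ge0; [rewrite subr_ge0|exact: sqr_ge0].
have g00 : ga = 0 by apply/eqP; rewrite eq_le gn g0.
move: h; rewrite g00 mulr0 => h.
have b0 : b = 0 by apply/eqP; rewrite -sqrf_eq0 eq_le h sqr_ge0.
rewrite b0; nra.
Qed.

Section L1.
Variables (R : realType) (P : {poly R}) (N g w1 w2 p b r es : R).
Hypothesis N0 : 0 < N.
Definition qf r1 r2 r3 := g * r1 ^+ 2 + 2%:R * w1 * r1 * r2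
  + 2%:R * w2 * r1 * r3 + p * r2 ^+ 2 + 2%:R * b * r2 * r3 + r * r3 ^+ 2.
Hypothesis psd : forall r1 r2 r3 : R, 0 <= qf r1 r2 r3.
Definition Dq e := (p - e) * (r - e) - b ^+ 2.
Definition Wq e := (r - e) * w1 ^+ 2 - 2%:R * b * w1 * w2 + (p - e) * w2 ^+ 2.
Definition phi e := N * g - 4%:R * (p + r) * e - 4%:R * e ^+ 2.
Hypothesis PE : forall e, P.[e] = phi e * Dq e - N * Wq e.
Hypothesis es0 : 0 <= es.
Hypothesis Pes : P.[es] = 0.
Hypothesis esmin : forall e, 0 <= e -> P.[e] = 0 -> es <= e.

Lemma psd2 : [/\ 0 <= g, 0 <= p, 0 <= r & b ^+ 2 <= p * r].
Proof.
have hg := psd 1 0 0; have hp := psd 0 1 0; have hr := psd 0 0 1.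
have g0 : 0 <= g by move: hg; rewrite /qf !expr2; lra.
have p0 : 0 <= p by move: hp; rewrite /qf !expr2; lra.
have r0 : 0 <= r by move: hr; rewrite /qf !expr2; lra.
split => //.
case: (ltP 0 p) => [pp|pn].
  have := psd 0 (- b) p.
  rewrite (_ : qf _ _ _ = p * (p * r - b ^+ 2)); last by rewrite /qf; ring.
  by rewrite pmulr_rge0 // subr_ge0.
have p00 : p = 0 by apply/eqP; rewrite eq_le pn p0.
suff -> : b = 0 by rewrite p00 expr2 !mul0r.
apply: two_eq0.
apply: (@lin_zero _ r (2%:R * b)) => t.
have := psd 0 t 1; rewrite /qf p00 !expr2; lra.
Qed.

Lemma detG : Wq 0 <= g * (p * r - b ^+ 2).
Proof.
have [g0 p0 r0 pr] := psd2.
rewrite /Wq !subr0.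
case: (ltP 0 (p * r - b ^+ 2)) => [pip|pin].
  rewrite -(ler_pM2l pip) -subr_ge0.
  have := psd (p * r - b ^+ 2) (- (r * w1 - b * w2)) (- (p * w2 - b * w1)).
  by rewrite /qf; congr (_ <= _); ring.
have pi0 : p * r - b ^+ 2 = 0 by apply/eqP; rewrite eq_le pin subr_ge0 pr.
rewrite pi0 mulr0.
case: (ltP 0 p) => [pp|pn].
  have e1 : p * w2 - b * w1 = 0.
    apply: two_eq0.
    apply: (@lin_zero _ g (2%:R * (p * w2 - b * w1))) => t.
    have := psd 1 (- b * t) (p * t).
    rewrite (_ : qf _ _ _ = g + 2%:R * (p * w2 - b * w1) * t
        + p * t ^+ 2 * (p * r - b ^+ 2)); last by rewrite /qf; ring.
    by rewrite pi0 mulr0 addr0.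
  rewrite -(pmulr_rle0 _ pp).
  have -> : p * (r * w1 ^+ 2 - 2%:R * b * w1 * w2 + p * w2 ^+ 2) =
    (p * w2 - b * w1) ^+ 2 + w1 ^+ 2 * (p * r - b ^+ 2) by ring.
  by rewrite e1 pi0 mulr0 expr2 mulr0 addr0.
have p00 : p = 0 by apply/eqP; rewrite eq_le pn p0.
have b0 : b = 0.
  by apply/eqP; rewrite -sqrf_eq0 eq_le sqr_ge0 andbT; move: pr; rewrite p00 mul0r.
have ew : w1 = 0.
  apply: two_eq0.
  apply: (@lin_zero _ g (2%:R * w1)) => t.
  have := psd 1 t 0; rewrite /qf p00 !expr2; lra.
by rewrite p00 b0 ew !expr2 !(mulr0, mul0r) !subr0 addr0.
Qed.

Lemma P0_ge0 : 0 <= P.[0].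
Proof.
rewrite PE /phi /Dq !subr0 !mulr0 !expr2 !mulr0 !subr0 -expr2.
have := detG; have [g0 p0 r0 pr] := psd2.
rewrite -mulrA -mulrBr => h; apply: mulr_ge0; [exact: ltW|by rewrite subr_ge0].
Qed.

Lemma Ppos {a : R} : 0 <= a -> a < es -> 0 < P.[a].
Proof.
move=> a0 ae; case: (ltP 0 P.[0]) => [P0|P0]; last first.
  have : P.[0] = 0 by apply/eqP; rewrite eq_le P0 P0_ge0.
  move/(esmin 0 (lexx 0)) => es00.
  by have := lt_le_trans ae es00; rewrite ltNge a0.
rewrite ltNge; apply/negP => Pa.
have [z /andP [z0 za]] : exists2 z, 0 <= z <= a & root (- P) z.
  by apply: poly_ivt => //; rewrite !hornerN oppr_le0 oppr_ge0 Pa ltW.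
rewrite rootN => /rootP Pz.
have := esmin z z0 Pz => ez.
by have := le_lt_trans ez (le_lt_trans za ae); rewrite ltxx.
Qed.

Definition dd := Num.sqrt ((p - r) ^+ 2 + 4%:R * b ^+ 2).
Definition sig1 := (p + r - dd) / 2%:R.

Lemma sig1_facts : [/\ 0 <= sig1, sig1 <= p, sig1 <= r, Dq sig1 = 0 &
   forall e, e < sig1 -> 0 < Dq e].
Proof.
have [g0 p0 r0 pr] := psd2.
have d0 : 0 <= dd := sqrtr_ge0 _.
have d2 : dd ^+ 2 = (p - r) ^+ 2 + 4%:R * b ^+ 2.
  by rewrite sqr_sqrtr // addr_ge0 ?sqr_ge0 // mulr_ge0 ?sqr_ge0.
have dle : dd <= p + r.
  rewrite leNgt; apply/negP => h.
  have : (p + r) * (p + r) < dd * dd by apply: ltr_pM => //; apply: addr_ge0.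
  move: d2; rewrite !expr2; nra.
have dge1 : p - r <= dd.
  rewrite leNgt; apply/negP => h.
  have : dd * dd < (p - r) * (p - r) by apply: ltr_pM.
  move: d2; rewrite !expr2; nra.
have dge2 : r - p <= dd.
  rewrite leNgt; apply/negP => h.
  have : dd * dd < (r - p) * (r - p) by apply: ltr_pM.
  move: d2; rewrite !expr2; nra.
have DE : forall e, Dq e = (sig1 - e) * ((p + r + dd) / 2%:R - e).
  move=> e; rewrite /Dq /sig1.
  apply: (@mulIf _ 4%:R); first by rewrite pnatr_eq0.
  have -> : ((p - e) * (r - e) - b ^+ 2) * 4%:R =
     (p + r - 2%:R * e) ^+ 2 - ((p - r) ^+ 2 + 4%:R * b ^+ 2) by ring.
  by rewrite -d2; field.
split.
- rewrite /sig1; apply: divr_ge0; lra.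
- rewrite /sig1 ler_pdivrMr //; lra.
- rewrite /sig1 ler_pdivrMr //; lra.
- by rewrite DE subrr mul0r.
- move=> e he; rewrite DE; apply: mulr_gt0; first by rewrite subr_gt0.
  rewrite subr_gt0; apply: lt_le_trans he _.
  rewrite /sig1 ler_pM2r ?invr_gt0 //; lra.
Qed.

Lemma es_le_sig1 : es <= sig1.
Proof.
have [s0 sp sr sD _] := sig1_facts.
have [g0 p0 r0 pr] := psd2.
rewrite leNgt; apply/negP => h.
have := Ppos s0 h; rewrite PE sD mulr0 sub0r oppr_gt0.
rewrite pmulr_rlt0 // ltNge; apply/negP; apply/negPn.
rewrite /Wq; apply: adj_psd; rewrite ?subr_ge0 //.
by move: sD; rewrite /Dq => /eqP; rewrite subr_eq0 => /eqP <-.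
Qed.

Lemma c2_bound_lt e : 0 <= e -> e < es ->
  24%:R * e ^+ 2 <= N * g + 4%:R * (p + r) ^+ 2 - 4%:R * (p * r - b ^+ 2).
Proof.
move=> e0 ee.
have [s0 sp sr sD Dpos] := sig1_facts.
have [g0 p0 r0 pr] := psd2.
have es1 := es_le_sig1.
have es1' : e < sig1 by apply: lt_le_trans es1.
have De := Dpos e es1'.
have pe : e <= p by apply: le_trans (ltW es1') sp.
have re : e <= r by apply: le_trans (ltW es1') sr.
have We : 0 <= Wq e.
  rewrite /Wq; apply: adj_psd; rewrite ?subr_ge0 //.
  by move: De; rewrite /Dq subr_gt0 => /ltW.
have phip : 0 < phi e.
  have := Ppos e0 ee; rewrite PE => h.
  have NW : 0 <= N * Wq e by apply: mulr_ge0 => //; exact: ltW.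
  have h2 : 0 < phi e * Dq e by lra.
  by move: h2; rewrite pmulr_lgt0.
move: phip; rewrite /phi => phip.
have h1 : e * e <= p * e by apply: ler_wpM2r.
have h2 : e * e <= r * e by apply: ler_wpM2r.
have h3 : e * e <= p * p by apply: ler_pM.
have h4 : e * e <= r * r by apply: ler_pM.
have h5 : e * e <= p * r by apply: ler_pM.
have h6 : 0 <= b * b by rewrite -expr2 sqr_ge0.
move: phip; rewrite !expr2; lra.
Qed.

Lemma c2_nonneg : 0 <= N * g + 4%:R * (p + r) ^+ 2 - 4%:R * (p * r - b ^+ 2).
Proof.
have [g0 p0 r0 pr] := psd2.
have h1 : 0 <= N * g by apply: mulr_ge0 => //; exact: ltW.
have h2 : 0 <= p * r by apply: mulr_ge0.
have h3 : 0 <= p * p by apply: mulr_ge0.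
have h4 : 0 <= r * r by apply: mulr_ge0.
have h6 : 0 <= b * b by rewrite -expr2 sqr_ge0.
move: h1; rewrite !expr2; lra.
Qed.

Lemma c2_bound :
  24%:R * es ^+ 2 <= N * g + 4%:R * (p + r) ^+ 2 - 4%:R * (p * r - b ^+ 2).
Proof.
set c2 := N * g + _ - _.
have c20 : 0 <= c2 := c2_nonneg.
case: (ltP 0 es) => [esp|esn]; last first.
  have -> : es = 0 by apply/eqP; rewrite eq_le esn es0.
  by rewrite expr2 !mulr0.
rewrite leNgt; apply/negP => hc.
set E := es ^+ 2.
have E0 : 0 < E by rewrite /E exprn_gt0.
set D0 := 24%:R * E - c2.
have D00 : 0 < D0 by rewrite /D0 subr_gt0.
set de := D0 / (96%:R * E).
have de0 : 0 < de by rewrite /de divr_gt0 // mulr_gt0.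
have de1 : de <= 1 / 4%:R.
  rewrite /de ler_pdivrMr ?mulr_gt0 //; rewrite /D0; lra.
have h0 : 0 <= es * (1 - de) by apply: mulr_ge0 => //; lra.
have h1 : es * (1 - de) < es.
  by rewrite gtr_pMr //; lra.
have := c2_bound_lt (es * (1 - de)) h0 h1.
have -> : (es * (1 - de)) ^+ 2 = E * (1 - de) ^+ 2 by rewrite /E exprMn.
have hE : 48%:R * E * de = D0 / 2%:R.
  rewrite /de; field.
  exact: lt0r_neq0.
have hsq : 0 <= E * de ^+ 2 by apply: mulr_ge0; [exact: ltW|exact: sqr_ge0].
move: hE hsq; rewrite /D0 => hE hsq.
rewrite -/c2; move: hc; rewrite -/E => hc.
clearbody de D0 E c2.
rewrite !expr2 in hsq *; nra.
Qed.

End L1.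

Section Center.
Variables (R : realType) (m00 m01 m02 m11 m12 m13 m22 m23 m33 : R).
Let m03 := m11 + m22.
Definition qraw (t0 t1 t2 t3 : R) : R :=
  t0 ^+ 2 * m00 + t1 ^+ 2 * m11 + t2 ^+ 2 * m22 + t3 ^+ 2 * m33
  + 2%:R * t0 * t1 * m01 + 2%:R * t0 * t2 * m02 + 2%:R * t0 * t3 * m03
  + 2%:R * t1 * t2 * m12 + 2%:R * t1 * t3 * m13 + 2%:R * t2 * t3 * m23.
Definition bfm (t0 t1 t2 t3 u0 u1 u2 u3 : R) : R :=
  t0 * u0 * m00 + t1 * u1 * m11 + t2 * u2 * m22 + t3 * u3 * m33
  + (t0 * u1 + t1 * u0) * m01 + (t0 * u2 + t2 * u0) * m02 + (t0 * u3 + t3 * u0) * m03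
  + (t1 * u2 + t2 * u1) * m12 + (t1 * u3 + t3 * u1) * m13 + (t2 * u3 + t3 * u2) * m23.
Definition xb := m13 / m33.
Definition yb := m23 / m33.
Definition cc := xb ^+ 2 + yb ^+ 2.
Definition zb := (m03 - 2%:R * xb * m13 - 2%:R * yb * m23 + cc * m33) / m33.
Definition kk := cc - zb.
Definition Gg := bfm 1 (-2%:R * xb) (-2%:R * yb) kk 1 (-2%:R * xb) (-2%:R * yb) kk.
Definition Gw1 := bfm 1 (-2%:R * xb) (-2%:R * yb) kk 0 1 0 (- xb).
Definition Gw2 := bfm 1 (-2%:R * xb) (-2%:R * yb) kk 0 0 1 (- yb).
Definition Gp := bfm 0 1 0 (- xb) 0 1 0 (- xb).
Definition Gb := bfm 0 1 0 (- xb) 0 0 1 (- yb).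
Definition Gr := bfm 0 0 1 (- yb) 0 0 1 (- yb).

Lemma qf_qraw r1 r2 r3 : qf R Gg Gw1 Gw2 Gp Gb Gr r1 r2 r3 =
  qraw r1 (-2%:R * xb * r1 + r2) (-2%:R * yb * r1 + r3) (kk * r1 - xb * r2 - yb * r3).
Proof. rewrite /qf /qraw /Gg /Gw1 /Gw2 /Gp /Gb /Gr /bfm; ring. Qed.

Hypothesis N0 : m33 != 0.

Lemma c2_id : c2f m00 m01 m02 m11 m12 m13 m22 m23 m33 =
  m33 * Gg + 4%:R * (Gp + Gr) ^+ 2 - 4%:R * (Gp * Gr - Gb ^+ 2).
Proof.
rewrite /c2f /Gg /Gp /Gr /Gb /bfm /kk /zb /cc /xb /yb /m03.
by field.
Qed.

Lemma Q_id e : - (4%:R * e ^+ 4) + c2f m00 m01 m02 m11 m12 m13 m22 m23 m33 * e ^+ 2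
  + c1f m00 m01 m02 m11 m12 m13 m22 m23 m33 * e + c0f m00 m01 m02 m11 m12 m13 m22 m23 m33 =
  phi R m33 Gg Gp Gr e * Dq R Gp Gb Gr e - m33 * Wq R Gw1 Gw2 Gp Gb Gr e.
Proof.
rewrite /c2f /c1f /c0f /phi /Dq /Wq /Gg /Gw1 /Gw2 /Gp /Gr /Gb /bfm /kk /zb /cc /xb /yb /m03.
by field.
Qed.
End Center.


Lemma layer1 (R : realType) (P : {poly R}) (N g w1 w2 p b r es : R) :
  0 < N -> (forall r1 r2 r3 : R, 0 <= qf R g w1 w2 p b r r1 r2 r3) ->
  (forall e, P.[e] = phi R N g p r e * Dq R p b r e - N * Wq R w1 w2 p b r e) ->
  0 <= es -> P.[es] = 0 -> (forall e, 0 <= e -> P.[e] = 0 -> es <= e) ->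
  (forall a, 0 <= a -> a < es -> 0 < P.[a]) /\
  24%:R * es ^+ 2 <= N * g + 4%:R * (p + r) ^+ 2 - 4%:R * (p * r - b ^+ 2).
Proof.
move=> N0 psd PE es0 Pes esmin; split.
  by move=> a; apply: (@Ppos R P N g w1 w2 p b r es); eauto.
by apply: (@c2_bound R P N g w1 w2 p b r es); eauto.
Qed.

Lemma layer2 (R : realType) (P : {poly R}) (c2 c1 c0 es : R) (xs : nat -> R) :
  (forall e, P.[e] = - (4%:R * e ^+ 4) + c2 * e ^+ 2 + c1 * e + c0) ->
  (forall e, (deriv P).[e] = - (16%:R * e ^+ 3) + 2%:R * c2 * e + c1) ->
  0 <= es -> P.[es] = 0 -> (forall a, 0 <= a -> a < es -> 0 < P.[a]) ->
  24%:R * es ^+ 2 <= c2 -> xs 0%N = 0 ->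
  (forall k, xs k.+1 = xs k - P.[xs k] / (deriv P).[xs k]) ->
  [/\ (forall a b : R, 0 <= a -> a < b -> b <= es -> P.[b] < P.[a]),
      (forall a b t : R, 0 <= a -> a <= es -> 0 <= b -> b <= es ->
         0 <= t -> t <= 1 -> P.[t * a + (1 - t) * b] <= t * P.[a] + (1 - t) * P.[b])
    & xs @ \oo --> es].
Proof.
move=> PE dPE es0 Pes Pp c2b xs0 xsS; split.
- move=> a b a0 ab be; exact: (@pr_decr R P c2 c1 c0 es PE dPE es0 Pes Pp c2b a b a0 ab be).
- move=> a b t; exact: (@pr_convex R P c2 c1 c0 es PE dPE c2b a b t).
- exact: (@pr_newton_cvg R P c2 c1 c0 es xs PE dPE es0 Pes Pp c2b xs0 xsS).
Qed.

Section Glue.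
Variables (R : realType) (n : nat) (x y : 'I_n -> R).
Notation m k l := (mm R n x y k l).
Notation GG f := (f R (m 0 0) (m 0 1) (m 0 2) (m 1 1) (m 1 2) (m 1 3) (m 2 2) (m 2 3) (m 3 3)).

Lemma F2 t0 t1 t2 t3 : 0 <= GG qraw t0 t1 t2 t3.
Proof.
rewrite /qraw -mm03 !mmE // /feat /= !inordK //=.
rewrite !mulr_sumr -!big_split /=.
apply: sumr_ge0 => i _.
apply: le_trans (sqr_ge0 (t0 * zc x y i + t1 * x i + t2 * y i + t3)) _.
rewrite le_eqVlt; apply/orP; left; apply/eqP; ring.
Qed.

Lemma mm33 : m 3 3 = n%:R.
Proof.
rewrite mmE // /feat /= !inordK //= mulr1 sumr_const card_ord.
by rewrite -[in RHS](mulr1 n%:R) mulr_natl.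
Qed.

Lemma PEq e : (Q4 x y).[e] = - (4%:R * e ^+ 4) + c2r R n x y * e ^+ 2 + c1r R n x y * e + c0r R n x y.
Proof. rewrite Q4E !hornerE; ring. Qed.

Lemma dPEq e : (deriv (Q4 x y)).[e] = - (16%:R * e ^+ 3) + 2%:R * c2r R n x y * e + c1r R n x y.
Proof.
rewrite Q4E; move: (c2r R n x y) (c1r R n x y) (c0r R n x y) => c2 c1 c0.
rewrite !(derivD, derivN, derivZ, derivC, derivXn, derivX, derivM) !hornerE /=.
ring.
Qed.

End Glue.

Theorem theorem1 (R : realType) (n : nat) (x y : 'I_n -> R) (eta_star : R) :
  0 <= eta_star ->
  (Q4 x y).[eta_star] = 0 ->
  (forall eta : R, 0 <= eta -> (Q4 x y).[eta] = 0 -> eta_star <= eta) ->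
  [/\ (* Q4 is decreasing on [0, eta_star] *)
      (forall a b : R, 0 <= a -> a < b -> b <= eta_star ->
         (Q4 x y).[b] < (Q4 x y).[a]),
      (* Q4 is concave up (convex) on [0, eta_star] *)
      (forall a b t : R, 0 <= a -> a <= eta_star -> 0 <= b -> b <= eta_star ->
         0 <= t -> t <= 1 ->
         (Q4 x y).[t * a + (1 - t) * b] <=
           t * (Q4 x y).[a] + (1 - t) * (Q4 x y).[b])
    & (* Newton's method from 0 converges to eta_star *)
      (newton x y) @ \oo --> eta_star].
Proof.
move=> es0 Pes esmin.
have [Pp c2b] : (forall a, 0 <= a -> a < eta_star -> 0 < (Q4 x y).[a]) /\
    24%:R * eta_star ^+ 2 <= c2r R n x y.
  case: (posnP n) => [n0|npos].
    have mz : forall k l, mm R n x y k l = 0.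
      by move=> k l; rewrite /mm mxE; apply: big1 => -[i hi] _; exfalso; have := hi; rewrite n0.
    have c0z : c0r R n x y = 0 by rewrite /c0r /c0f !mz; ring.
    have c1z : c1r R n x y = 0 by rewrite /c1r /c1f !mz; ring.
    have c2z : c2r R n x y = 0 by rewrite /c2r /c2f !mz; ring.
    have es00 : eta_star = 0.
      move: Pes; rewrite PEq c0z c1z c2z !mul0r !addr0 => /eqP.
      rewrite oppr_eq0 mulf_eq0 pnatr_eq0 /= expf_eq0 /=.
      by move/eqP.
    split.
      by move=> a a0 ae; exfalso; move: ae; rewrite es00 ltNge a0.
    by rewrite es00 c2z expr2 !mulr0.
  have N0 : 0 < mm R n x y 3 3 by rewrite mm33 ltr0n.
  have N0' : mm R n x y 3 3 != 0 by rewrite lt0r_neq0.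
  have := @layer1 R (Q4 x y) (mm R n x y 3 3)
    (Gg R (mm R n x y 0 0) (mm R n x y 0 1) (mm R n x y 0 2) (mm R n x y 1 1) (mm R n x y 1 2) (mm R n x y 1 3) (mm R n x y 2 2) (mm R n x y 2 3) (mm R n x y 3 3))
    (Gw1 R (mm R n x y 0 0) (mm R n x y 0 1) (mm R n x y 0 2) (mm R n x y 1 1) (mm R n x y 1 2) (mm R n x y 1 3) (mm R n x y 2 2) (mm R n x y 2 3) (mm R n x y 3 3))
    (Gw2 R (mm R n x y 0 0) (mm R n x y 0 1) (mm R n x y 0 2) (mm R n x y 1 1) (mm R n x y 1 2) (mm R n x y 1 3) (mm R n x y 2 2) (mm R n x y 2 3) (mm R n x y 3 3))
    (Gp R (mm R n x y 0 0) (mm R n x y 0 1) (mm R n x y 0 2) (mm R n x y 1 1) (mm R n x y 1 2) (mm R n x y 1 3) (mm R n x y 2 2) (mm R n x y 2 3) (mm R n x y 3 3))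
    (Gb R (mm R n x y 0 0) (mm R n x y 0 1) (mm R n x y 0 2) (mm R n x y 1 1) (mm R n x y 1 2) (mm R n x y 1 3) (mm R n x y 2 2) (mm R n x y 2 3) (mm R n x y 3 3))
    (Gr R (mm R n x y 0 0) (mm R n x y 0 1) (mm R n x y 0 2) (mm R n x y 1 1) (mm R n x y 1 2) (mm R n x y 1 3) (mm R n x y 2 2) (mm R n x y 2 3) (mm R n x y 3 3))
    eta_star N0.
  rewrite -c2_id //.
  move=> h; apply: h => //.
    by move=> r1 r2 r3; rewrite qf_qraw; apply: F2.
  by move=> e; rewrite PEq -Q_id.
exact: (@layer2 R (Q4 x y) _ _ _ eta_star (newton x y) (@PEq R n x y) (@dPEq R n x y)
  es0 Pes Pp c2b (erefl _) (fun k => erefl _)).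
Qed.
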